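(* Let $\mathcal A$ be an NFA and let $R$ be a strict partial order on its states with $R\subseteq\ \subseteq^{\mathrm{fw}}$. Then $P(\mathrm{id},R)$ is good for pruning on NFA: $\mathcal L(\mathrm{Prune}(\mathcal A,P(\mathrm{id},R)))=\mathcal L(\mathcal A)$. In particular this holds for $R$ the strict part of $\subseteq^{\mathrm{fw}}$.
   Context: An NFA is $\mathcal A=(\Sigma,Q,I,F,\delta)$, $\delta\subseteq Q\times\Sigma\times Q$ (assumed forward and backward complete); its language is the set of finite words $w$ having a finite trace on $w$ starting in $I$ and ending in $F$ (the empty trace on $\varepsilon$ is a single state). Forward finite trace inclusion: $p\subseteq^{\mathrm{fw}}q$ iff for every finite word $w$, if there is a finite $w$-trace from $p$ ending in $F$ then there is a finite $w$-trace from $q$ ending in $F$. Strict part: $p\subseteq q$ and not $q\subseteq p$. $\mathrm{Prune}(\mathcal A,P)$ has transition set $\{t\in\delta:\nexists t'\in\delta,(t,t')\in P\}$; $P(R_b,R_f)=\{((p,\sigma,r),(p',\sigma,r'))\in\delta\times\delta:p\,R_b\,p',\ r\,R_f\,r'\}$; $\mathrm{id}$ is the identity relation. *)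

(* Defs.v *)
From mathcomp Require Import all_boot.
Set Implicit Arguments. Unset Strict Implicit. Unset Printing Implicit Defensive.

Record NFA (Sigma : Type) (Q : finType) := mkNFA {
  init  : Q -> Prop;
  final : Q -> Prop;
  delta : Q -> Sigma -> Q -> Prop }.

Definition transition (Sigma : Type) (Q : finType) := (Q * Sigma * Q)%type.

Definition forward_complete Sigma Q (A : NFA Sigma Q) : Prop :=
  forall (p : Q) (a : Sigma), exists r, delta A p a r.
Definition backward_complete Sigma Q (A : NFA Sigma Q) : Prop :=
  forall (r : Q) (a : Sigma), exists p, delta A p a r.

(* trace A q w qs : the sequence q :: qs is a finite w-trace of A starting at q
   (qs lists the states after each letter; the trace ends in last q qs). *)
Fixpoint trace Sigma Q (A : NFA Sigma Q) (q : Q) (w : seq Sigma) (qs : seq Q)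
  : Prop :=
  match w, qs with
  | [::], [::] => True
  | a :: w', q' :: qs' => delta A q a q' /\ trace A q' w' qs'
  | _, _ => False
  end.

Definition accepts_from Sigma Q (A : NFA Sigma Q) (q : Q) (w : seq Sigma) : Prop :=
  exists qs, trace A q w qs /\ final A (last q qs).

Definition in_lang Sigma Q (A : NFA Sigma Q) (w : seq Sigma) : Prop :=
  exists q, init A q /\ accepts_from A q w.

Definition same_lang Sigma Q (A B : NFA Sigma Q) : Prop :=
  forall w, in_lang A w <-> in_lang B w.

Definition fw_incl Sigma Q (A : NFA Sigma Q) (p q : Q) : Prop :=
  forall w, accepts_from A p w -> accepts_from A q w.

Definition strict_part (T : Type) (R : T -> T -> Prop) (p q : T) : Prop :=
  R p q /\ ~ R q p.

Definition strict_partial_order (T : Type) (R : T -> T -> Prop) : Prop :=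
  (forall x, ~ R x x) /\ (forall x y z, R x y -> R y z -> R x z).

Definition Prel Sigma Q (A : NFA Sigma Q) (Rb Rf : Q -> Q -> Prop)
  (t t' : transition Sigma Q) : Prop :=
  match t, t' with
  | (p, s, r), (p', s', r') =>
      delta A p s r /\ delta A p' s' r' /\ s = s' /\ Rb p p' /\ Rf r r'
  end.

Definition Prune Sigma Q (A : NFA Sigma Q)
  (P : transition Sigma Q -> transition Sigma Q -> Prop) : NFA Sigma Q :=
  mkNFA (init A) (final A)
    (fun p a r => delta A p a r /\
       ~ (exists t' : transition Sigma Q,
            delta A t'.1.1 t'.1.2 t'.2 /\ P (p, a, r) t')).

(* Main.v *)
Require Import Defs.
From mathcomp Require Import all_boot.
From Stdlib Require Import ClassicalEpsilon.

Definition dec (P : Prop) : bool := if excluded_middle_informative P then true else false.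
Lemma decP (P : Prop) : reflect P (dec P).
Proof. rewrite /dec; case: excluded_middle_informative => h; constructor; auto. Qed.

Section S.
Variables (Sigma : Type) (Q : finType) (A : NFA Sigma Q) (R : Q -> Q -> Prop).
Hypothesis HR : strict_partial_order R.
Hypothesis Hinc : forall p q, R p q -> fw_incl A p q.

Definition msr (x : Q) := #|[pred y | dec (R x y)]|.

Lemma msr_lt x y : R x y -> msr y < msr x.
Proof.
move=> Rxy; rewrite /msr; apply: proper_card; apply/properP; split.
  apply/subsetP => z; rewrite !inE => /decP Ryz; apply/decP.
  exact: (proj2 HR) Rxy Ryz.
exists y; rewrite !inE; first by apply/decP.
by apply/negP => /decP; apply: (proj1 HR).
Qed.

Lemma maxsucc p a w : forall n r, msr r < n -> delta A p a r -> accepts_from A r w ->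
  exists r', [/\ delta A p a r', accepts_from A r' w &
     forall r'', delta A p a r'' -> ~ R r' r''].
Proof.
elim=> [//|n IH] r Hn Hd Hacc.
case: (classic (exists r'', delta A p a r'' /\ R r r'')).
  move=> [r'' [Hd' Rr]]; apply: (IH r'') => //.
    by have := @msr_lt _ _ Rr; rewrite ltnS in Hn; move=> h; exact: leq_trans h Hn.
  exact: (Hinc _ _ Rr _ Hacc).
move=> Hno; exists r; split => // r'' H1 H2; apply: Hno; eauto.
Qed.

Lemma prune_acc w : forall p, accepts_from A p w -> accepts_from (Prune A (Prel A eq R)) p w.
Proof.
elim: w => [|a w IH] p [qs [Ht Hf]].
  by case: qs Ht Hf => // _ Hf; exists [::].
case: qs Ht Hf => [//|r qs] /= [Hd Ht] Hf.
have [r' [Hd' Hacc Hmax]] := @maxsucc p a w (msr r).+1 r (ltnSn _) Hd (ex_intro _ qs (conj Ht Hf)).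
have [qs' [Ht' Hf']] := IH _ Hacc.
exists (r' :: qs'); split => //=; split => //; split => //.
move=> [[[p' a'] r''] [_ /= [_ [Hd'' [e1 [e2 Rr]]]]]]; subst.
exact: Hmax Hd'' Rr.
Qed.

Lemma prune_sub p w : accepts_from (Prune A (Prel A eq R)) p w -> accepts_from A p w.
Proof.
move=> [qs [Ht Hf]]; exists qs; split => //.
elim: w p qs Ht {Hf} => [|a w IH] p [|r qs] //= [[Hd _] Ht]; split; auto.
Qed.

Lemma main_same : same_lang (Prune A (Prel A eq R)) A.
Proof.
move=> w; split => [[q [Hi Ha]]|[q [Hi Ha]]]; exists q; split => //.
  exact: prune_sub.
exact: prune_acc.
Qed.
End S.

Theorem theorem5p6 (Sigma : Type) (Q : finType) (A : NFA Sigma Q)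
  (Hfw : forward_complete A) (Hbw : backward_complete A) :
  (forall R : Q -> Q -> Prop,
     strict_partial_order R ->
     (forall p q, R p q -> fw_incl A p q) ->
     same_lang (Prune A (Prel A eq R)) A)
  /\ same_lang (Prune A (Prel A eq (strict_part (fw_incl A)))) A.
Proof.
split; first by move=> R HR Hi; exact: main_same.
apply: main_same; last by move=> p q [].
split; first by move=> x [h1 h2]; apply: h2.
move=> x y z [Hxy Nyx] [Hyz Nzy]; split.
  by move=> w h; apply: Hyz; apply: Hxy.
by move=> Hzx; apply: Nzy => w h; apply: Hxy; apply: Hzx.
Qed.
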